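(* Let $n\le m$ and $0<\rho<n$. Then $$\left\lfloor\frac{q^{mn}}{V_\rho(q^m,n)}\right\rfloor+1\le K_{\mathrm R}(q^m,n,\rho)\le q^{m(n-\rho)}.$$
   Context: The rank $\mathrm{rk}(\mathbf x)$ of $\mathbf x\in\mathrm{GF}(q^m)^n$ is the maximum number of its coordinates linearly independent over $\mathrm{GF}(q)$, and $d_{\mathrm R}(\mathbf x,\mathbf y)=\mathrm{rk}(\mathbf x-\mathbf y)$. The rank covering radius of $C\subseteq\mathrm{GF}(q^m)^n$ is $\max_{\mathbf x}\min_{\mathbf c\in C}d_{\mathrm R}(\mathbf x,\mathbf c)$, and $K_{\mathrm R}(q^m,n,\rho)$ is the minimum cardinality of a code in $\mathrm{GF}(q^m)^n$ with rank covering radius $\rho$. $V_\rho(q^m,n)=\sum_{u=0}^\rho {n\brack u}\alpha(m,u)$ is the volume of a ball of rank radius $\rho$, where $\alpha(m,0)=1$, $\alpha(m,u)=\prod_{i=0}^{u-1}(q^m-q^i)$ and ${n\brack u}=\alpha(n,u)/\alpha(u,u)$. *)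

(* Defs.v *)
From HB Require Import structures.
From mathcomp Require Import all_boot all_order all_algebra all_field.
Set Implicit Arguments. Unset Strict Implicit. Unset Printing Implicit Defensive.
Import GRing.Theory.

(* GF(q^m) is modelled as a finite field L together with a field embedding
   f : F -> L of a finite field F = GF(q); q := #|F|, and #|L| = q^m. *)

Section RankMetric.
Variables (F L : finFieldType) (f : {rmorphism F -> L}) (n : nat).

Local Open Scope ring_scope.

Definition lin_indep (x : 'rV[L]_n) (S : {set 'I_n}) : bool :=
  [forall c : {ffun 'I_n -> F},
     (\sum_(i in S) f (c i) * x 0 i == 0) ==> [forall i in S, c i == 0]].

Definition rk (x : 'rV[L]_n) : nat :=
  (\max_(S : {set 'I_n} | lin_indep x S) #|S|)%N.

Definition dR (x y : 'rV[L]_n) : nat := rk (x - y).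

Definition covrad (C : {set 'rV[L]_n}) : nat :=
  (\max_(x : 'rV[L]_n) \big[minn/n]_(c in C) dR x c)%N.

Definition KR (rho : nat) : nat :=
  \big[minn/#|{: 'rV[L]_n}|]_(C : {set 'rV[L]_n} | (C != set0) && (covrad C == rho))
     #|C|.

End RankMetric.

Definition alpha (q m u : nat) : nat := \prod_(i < u) (q ^ m - q ^ i).

Definition gbin (q n u : nat) : nat := alpha q n u %/ alpha q u u.

(* volume of a rank-metric ball of radius rho in GF(q^m)^n *)
Definition Vol (q m n rho : nat) : nat :=
  \sum_(u < rho.+1) gbin q n u * alpha q m u.

(* Main.v *)
Require Import Defs.
From HB Require Import structures.
From mathcomp Require Import all_boot all_order all_algebra all_field.
From mathcomp Require Import zify ring.

Fixpoint Gb (q n u : nat) : nat :=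
  match n, u with
  | _, 0 => 1
  | 0, _.+1 => 0
  | n'.+1, u'.+1 => Gb q n' u' + q ^ u'.+1 * Gb q n' u'.+1
  end.

Lemma alphaS q m u : alpha q m u.+1 = alpha q m u * (q ^ m - q ^ u).
Proof. by rewrite /alpha big_ord_recr. Qed.

Lemma alpha0 q m : alpha q m 0 = 1.
Proof. by rewrite /alpha big_ord0. Qed.

Lemma alphaSS q n u : alpha q n.+1 u.+1 = (q ^ n.+1 - 1) * q ^ u * alpha q n u.
Proof.
rewrite /alpha big_ord_recl expn0 -mulnA; congr (_ * _).
have -> : q ^ u = \prod_(i < u) q by rewrite prod_nat_const card_ord.
rewrite -big_split /=.
by apply: eq_bigr => i _; rewrite /bump /= add1n !expnS mulnBr.
Qed.

Lemma alpha_gt {q n u} : n < u -> alpha q n u = 0.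
Proof.
move=> lt; rewrite /alpha (bigD1 (Ordinal lt)) //= subnn; by rewrite mul0n.
Qed.

Lemma alpha_Gb q n u : 1 < q -> alpha q n u = Gb q n u * alpha q u u.
Proof.
move=> q1; elim: n u => [|n IH] [|u] //=.
- by rewrite !alpha0.
- by rewrite alpha_gt.
- by rewrite !alpha0.
have e2 : Gb q n u.+1 * alpha q u.+1 u.+1 = alpha q n u.+1 by rewrite IH.
have e1 : Gb q n u * alpha q u u = alpha q n u by rewrite IH.
rewrite mulnDl -mulnA e2 [alpha q u.+1 u.+1]alphaSS.
have -> : Gb q n u * ((q ^ u.+1 - 1) * q ^ u * alpha q u u) =
   (q ^ u.+1 - 1) * q ^ u * (Gb q n u * alpha q u u) by ring.
rewrite e1 alphaSS.
case: (leqP u n) => un; last first.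
  by rewrite alphaS (alpha_gt un) !(muln0, mul0n, addn0).
rewrite alphaS.
have h3 : q ^ u.+1 * (q ^ n - q ^ u) = q ^ u * (q ^ n.+1 - q ^ u.+1) by rewrite !mulnBr !expnS; congr (_ - _); ring.
have h1 : 1 <= q ^ u.+1 by rewrite expn_gt0; lia.
have h2 : q ^ u.+1 <= q ^ n.+1 by rewrite leq_exp2l.
have -> : q ^ u.+1 * (alpha q n u * (q ^ n - q ^ u)) = (q ^ u.+1 * (q ^ n - q ^ u)) * alpha q n u by ring.
rewrite h3.
have -> : (q ^ n.+1 - 1) * q ^ u * alpha q n u = ((q ^ u.+1 - 1) + (q ^ n.+1 - q ^ u.+1)) * q ^ u * alpha q n u.
  congr (_ * _ * _); lia.
ring.
Qed.

Lemma C2S u : 'C(u.+1, 2) = 'C(u, 2) + u.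
Proof. by rewrite binS bin1. Qed.

Lemma bin2_le u : 'C(u, 2) <= u * u.
Proof. elim: u => [//|u IH]; rewrite C2S; nia. Qed.

Definition beta q m u := \prod_(i < u) (q ^ (m - i) - 1).

Lemma alpha_split q m u : u <= m -> alpha q m u = q ^ 'C(u, 2) * beta q m u.
Proof.
elim: u => [|u IH] um; first by rewrite alpha0 /beta big_ord0.
rewrite alphaS IH ?(ltnW um) // /beta big_ord_recr /= C2S expnD.
have -> : q ^ m - q ^ u = q ^ u * (q ^ (m - u) - 1).
  by rewrite mulnBr muln1 -expnD subnKC // ltnW.
rewrite /beta; ring.
Qed.

Lemma coprime_pow1 q k : 0 < k -> 0 < q -> coprime (q ^ k - 1) q.
Proof.
move=> k0 q0; rewrite /coprime; set d := gcdn _ _.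
have d1 : d %| q ^ k - 1 by apply: dvdn_gcdl.
have d2 : d %| q ^ k by apply: (dvdn_trans (dvdn_gcdr _ _)); apply: dvdn_exp.
have : d %| q ^ k - (q ^ k - 1) by apply: dvdn_sub.
have qk : 0 < q ^ k by rewrite expn_gt0 q0.
have -> : q ^ k - (q ^ k - 1) = 1 by lia.
by rewrite dvdn1.
Qed.

Lemma beta_coprime q m u : 0 < q -> u <= m -> coprime (beta q m u) q.
Proof.
move=> q0 um; rewrite /beta; apply: (big_ind (fun k => coprime k q)).
- exact: coprime1n.
- by move=> a b ca cb; rewrite coprimeMl ca cb.
move=> i _; apply: coprime_pow1 => //; rewrite subn_gt0; exact: (leq_trans (ltn_ord i)).
Qed.

Lemma Gb0 q k : Gb q k 0 = 1.
Proof. by case: k. Qed.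

Lemma Gb_coprime q n u : u <= n -> coprime (Gb q n u) q.
Proof.
elim: n u => [|n IH] [|u] un; rewrite /= ?Gb0 ?coprime1n //.
case: (leqP u.+1 n) => hu.
  have -> : q ^ u.+1 * Gb q n u.+1 = (q ^ u * Gb q n u.+1) * q by rewrite expnSr; ring.
  rewrite coprime_sym addnC /coprime gcdnMDl -/(coprime _ _).
  by rewrite coprime_sym IH.
have -> : Gb q n u.+1 = 0.
  elim: n {IH un} u hu => [|n' IH'] [|u'] //= h; rewrite !IH' //; lia.
by rewrite muln0 addn0 IH.
Qed.

Lemma bin2_lt u : 'C(u.+1, 2) <= u * u.+1.
Proof. elim: u => [//|u IH]; rewrite C2S; nia. Qed.

Lemma alpha_lb q m u : 1 < q -> u < m -> q ^ 'C(u.+1, 2) <= alpha q m u.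
Proof.
move=> q1; elim: u => [|u IH] um; first by rewrite alpha0.
rewrite alphaS C2S expnD leq_mul ?IH ?(ltnW um) //.
have h0 : q ^ u.+2 <= q ^ m by rewrite leq_exp2l.
have h1 : q ^ u.+1 = q * q ^ u by rewrite expnS.
have h2 : q ^ u.+2 = q * (q * q ^ u) by rewrite !expnS.
nia.
Qed.

Definition Tq q m n u := Gb q n u * alpha q m u.

Lemma vol_ndvd q m n rho : 1 < q -> 0 < rho -> rho < n -> n <= m ->
  \sum_(u < n.+1) Tq q m n u = q ^ (m * n) ->
  ~~ (\sum_(u < rho.+1) Tq q m n u %| q ^ (m * n)).
Proof.
move=> q1 r0 rn nm Htot; apply/negP => Vd.
have q0 : 0 < q by apply: ltnW.
move: Htot Vd; rewrite -!(big_mkord xpredT).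
set V := \sum_(0 <= u < rho.+1) Tq q m n u.
rewrite (@big_cat_nat _ _ _ rho.+1) //= -/V; last by apply: ltnW.
rewrite big_ltn //.
set e := 'C(rho.+1, 2).
set R := \sum_(rho.+2 <= u < n.+1) Tq q m n u.
set W := Gb q n rho.+1 * beta q m rho.+1.
have eT : Tq q m n rho.+1 = q ^ e * W.
  by rewrite /Tq alpha_split; [rewrite /W; ring | apply: (leq_trans rn)].
rewrite eT => Htot Vd.
have dR : q ^ e.+1 %| R.
  rewrite /R big_nat_cond; apply: dvdn_sum => u /andP [/andP [h1 h2] _].
  rewrite /Tq alpha_split; last by apply: (leq_trans _ nm).
  apply: dvdn_mull; apply: dvdn_mulr; apply: dvdn_exp2l.
  have : 'C(rho.+2, 2) <= 'C(u, 2) by apply: leq_bin2l.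
  rewrite C2S -/e; lia.
have emn : e.+1 <= m * n.
  have := bin2_lt rho; rewrite -/e; nia.
have dmn : q ^ e.+1 %| q ^ (m * n) by apply: dvdn_exp2l.
have dV : q ^ e %| V.
  have h : q ^ e %| q ^ (m * n) by apply: dvdn_exp2l; apply: ltnW.
  move: h; rewrite -Htot dvdn_addl //; apply: dvdn_add; first by apply: dvdn_mulr.
  by apply: (dvdn_trans _ dR); apply: dvdn_exp2l.
case/dvdnP: dV => w ew.
have dwW : q %| w + W.
  move: dmn; rewrite -Htot addnA dvdn_addl // ew expnSr.
  have -> : w * q ^ e + q ^ e * W = q ^ e * (w + W) by ring.
  by rewrite dvdn_pmul2l // expn_gt0 q0.
have cW : coprime W q.
  by rewrite /W coprimeMl Gb_coprime ?beta_coprime //; apply: (leq_trans rn).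
have cw : coprime w q.
  rewrite /coprime; set d := gcdn w q.
  have d1 : d %| w by apply: dvdn_gcdl.
  have d2 : d %| q by apply: dvdn_gcdr.
  have d3 : d %| W by rewrite -(dvdn_addr _ d1); apply: (dvdn_trans d2).
  have : d %| gcdn W q by rewrite dvdn_gcd d3 d2.
  by rewrite (eqP cW) dvdn1.
have w1 : w = 1.
  have dw : w %| q ^ (m * n) by apply: dvdn_trans Vd; rewrite ew dvdn_mulr.
  have := coprimeXr (m * n) cw; rewrite /coprime (gcdn_idPl dw) => /eqP //.
move: ew; rewrite w1 mul1n => eV.
have : q ^ e < V.
  rewrite /V big_ltn // big_nat_recr //= /Tq Gb0 alpha0 muln1.
  have : q ^ e <= Gb q n rho * alpha q m rho.
    apply: (leq_trans (alpha_lb _ _ _ q1 (leq_trans rn nm))).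
    apply: leq_pmull; rewrite lt0n; apply/negP => /eqP G0.
    have := Gb_coprime q _ _ (ltnW rn); rewrite G0 /coprime gcd0n => /eqP q1'.
    by move: q1; rewrite q1'.
  lia.
by rewrite eV ltnn.
Qed.

Set Implicit Arguments. Unset Strict Implicit. Unset Printing Implicit Defensive.
Import GRing.Theory.

Section Comb.
Variables (F L : finFieldType) (f : {rmorphism F -> L}) (n : nat).
Local Open Scope ring_scope.
Implicit Types (x : 'rV[L]_n) (A B S T : {set 'I_n}) (c d : {ffun 'I_n -> F}).

Definition comb x c A : L := \sum_(i in A) f (c i) * x 0 i.
Definition cspan x A : {set L} := [set comb x c A | c : {ffun 'I_n -> F}].
Definition ext c A : {ffun 'I_n -> F} := [ffun i => if i \in A then c i else 0].

Lemma comb_ext x c A B : A \subset B -> comb x (ext c A) B = comb x c A.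
Proof.
move=> sAB; rewrite /comb big_mkcond [RHS]big_mkcond /=; apply: eq_bigr => i _.
rewrite ffunE; case: (boolP (i \in A)) => iA; first by rewrite (subsetP sAB i iA).
by case: ifP => _; rewrite ?rmorph0 ?mul0r.
Qed.

Lemma cspan_mono x A B : A \subset B -> cspan x A \subset cspan x B.
Proof.
move=> sAB; apply/subsetP => y /imsetP [c _ ->].
by apply/imsetP; exists (ext c A) => //; rewrite comb_ext.
Qed.

Lemma comb_lin x a c d A :
  f a * comb x c A + comb x d A = comb x [ffun i => a * c i + d i] A.
Proof.
rewrite /comb mulr_sumr -big_split /=; apply: eq_bigr => i _.
by rewrite ffunE rmorphD rmorphM /= mulrDl mulrA.
Qed.

Lemma cspan_lin x a s t A : s \in cspan x A -> t \in cspan x A ->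
  f a * s + t \in cspan x A.
Proof.
move=> /imsetP [c _ ->] /imsetP [d _ ->]; rewrite comb_lin.
by apply/imsetP; exists [ffun i => a * c i + d i].
Qed.

Lemma cspan0 x A : 0 \in cspan x A.
Proof.
apply/imsetP; exists 0 => //; rewrite /comb big1 // => i _.
by rewrite ffunE rmorph0 mul0r.
Qed.

Lemma comb_setU1 x c j A : j \notin A ->
  comb x c (j |: A) = f (c j) * x 0 j + comb x c A.
Proof. by move=> jA; rewrite /comb big_setU1. Qed.

Definition gadd x j (p : F * L) : L := f p.1 * x 0 j + p.2.

Lemma cspan_U1 x j A : j \notin A ->
  cspan x (j |: A) = [set gadd x j p | p in setX [set: F] (cspan x A)].
Proof.
move=> jA; apply/setP => y; apply/idP/idP.
  case/imsetP=> c _ ->; apply/imsetP; exists (c j, comb x c A); last by rewrite comb_setU1.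
  by rewrite in_setX in_setT /=; apply/imsetP; exists c.
case/imsetP=> [[a s]]; rewrite in_setX /= => /andP [_ /imsetP [d _ ->]] ->.
apply/imsetP; exists [ffun i => if i == j then a else d i] => //.
rewrite comb_setU1 // ffunE eqxx /gadd /=; congr (_ + _).
apply: eq_bigr => i iA; rewrite ffunE; case: eqP => // eij.
by move: jA; rewrite -eij iA.
Qed.

Lemma card_cspan_U1 x j A : j \notin A ->
  #|cspan x (j |: A)| =
  (if x 0%R j \in cspan x A then #|cspan x A| else #|F| * #|cspan x A|)%N.
Proof.
move=> jA; rewrite cspan_U1 //; case: ifP => xin.
  apply: eq_card => y; apply/idP/idP.
    case/imsetP=> [[a s]]; rewrite in_setX /= => /andP [_ sin] ->.
    by rewrite /gadd /=; apply: cspan_lin.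
  move=> yin; apply/imsetP; exists (0, y); first by rewrite in_setX in_setT.
  by rewrite /gadd /= rmorph0 mul0r add0r.
rewrite card_in_imset ?cardsX ?cardsT //.
move=> [a s] [b t]; rewrite !in_setX /= => /andP [_ sin] /andP [_ tin].
rewrite /gadd /= => e.
have ab : a = b.
  apply/eqP; apply/negP => /negP nab; move/negP: xin; apply.
  have fne : f (a - b) != 0 by rewrite fmorph_eq0 subr_eq0.
  have -> : x 0 j = f ((a - b)^-1) * t + (f (- (a - b)^-1) * s + 0).
    rewrite addr0 rmorphN mulNr fmorphV.
    apply: (mulfI fne); rewrite mulrDr mulrA divff // mul1r mulrN mulrA divff // mul1r.
    have -> : t = f a * x 0 j + s - f b * x 0 j by rewrite e addrAC subrr add0r.
    rewrite rmorphB mulrBl; ring.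
  by apply: cspan_lin => //; apply: cspan_lin => //; apply: cspan0.
by move: e; rewrite ab => /addrI ->.
Qed.

Lemma indepP x S : reflect (forall c, comb x c S = 0 -> forall i, i \in S -> c i = 0)
  (lin_indep f x S).
Proof.
apply: (iffP forallP) => H.
  move=> c e i iS; move: (H c) => /implyP /(_ (introT eqP e)) /forall_inP /(_ i iS).
  by move/eqP.
move=> c; apply/implyP => /eqP e; apply/forall_inP => i iS; apply/eqP; exact: H.
Qed.

Lemma indep_sub x S T : T \subset S -> lin_indep f x S -> lin_indep f x T.
Proof.
move=> sTS /indepP H; apply/indepP => c e i iT.
have := H (ext c T); rewrite comb_ext // e => /(_ erefl i (subsetP sTS i iT)).
by rewrite ffunE iT.
Qed.

Lemma comb_in x c A : comb x c A \in cspan x A.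
Proof. by apply/imsetP; exists c. Qed.

Lemma indep_notin x S j : lin_indep f x S -> j \in S -> x 0 j \notin cspan x (S :\ j).
Proof.
move/indepP=> H jS; apply/negP => /imsetP [c _ e].
pose c' := [ffun i => if i == j then -1 else c i].
have: comb x c' S = 0.
  rewrite -(setD1K jS) comb_setU1 ?setD11 // ffunE eqxx rmorphN1 mulN1r.
  have -> : comb x c' (S :\ j) = comb x c (S :\ j).
    apply: eq_bigr => i; rewrite in_setD1 => /andP [nij _].
    by rewrite ffunE (negPf nij).
  by rewrite -e addNr.
move/H/(_ j jS); rewrite ffunE eqxx => /eqP; by rewrite oppr_eq0 oner_eq0.
Qed.

Lemma indep_add x S j : lin_indep f x S -> j \notin S -> x 0 j \notin cspan x S ->
  lin_indep f x (j |: S).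
Proof.
move/indepP=> H jS xn; apply/indepP => c; rewrite comb_setU1 // => e.
have cj : c j = 0.
  case: (eqVneq (c j) 0) => // nz; exfalso; apply: (negP xn).
  have fne : f (c j) != 0 by rewrite fmorph_eq0.
  have -> : x 0 j = f (- (c j)^-1) * comb x c S + 0.
    rewrite addr0; apply: (mulfI fne); rewrite mulrA -rmorphM mulrN divff //.
    rewrite rmorphN1 mulN1r; apply/eqP; rewrite -addr_eq0; exact/eqP.
  by apply: cspan_lin; [exact: comb_in | exact: cspan0].
move: e; rewrite cj rmorph0 mul0r add0r => /H Hc i.
by rewrite in_setU1 => /orP [/eqP -> // | iS]; exact: Hc.
Qed.

Lemma cspan_set0 x : cspan x set0 = [set 0].
Proof.
apply/setP => y; rewrite in_set1; apply/imsetP/eqP.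
  by case=> c _ ->; rewrite /comb big_set0.
by move=> ->; exists 0 => //; rewrite /comb big_set0.
Qed.

Lemma indep_card x S : lin_indep f x S -> #|cspan x S| = (#|F| ^ #|S|)%N.
Proof.
move Ek: #|S| => k; elim: k S Ek => [|k IH] S cS iS.
  move/eqP: cS; rewrite cards_eq0 => /eqP ->; by rewrite cspan_set0 cards1.
have : (0 < #|S|)%N by rewrite cS.
rewrite card_gt0 => /set0Pn [j jS].
rewrite -(setD1K jS) card_cspan_U1 ?setD11 // (negPf (indep_notin iS jS)).
rewrite IH ?expnS //; last by apply: (indep_sub _ iS); apply: subD1set.
by move: cS; rewrite (cardsD1 j S) jS add1n => [[]].
Qed.

Lemma exists_basis x A : exists S, [/\ S \subset A, lin_indep f x S & #|cspan x S| = #|cspan x A|].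
Proof.
move Ek: #|A| => k; elim: k A Ek => [|k IH] A cA.
  move/eqP: cA; rewrite cards_eq0 => /eqP ->; exists set0; split => //.
  by apply/indepP => c _ i; rewrite in_set0.
have : (0 < #|A|)%N by rewrite cA.
rewrite card_gt0 => /set0Pn [j jA].
have cA' : #|A :\ j| = k by move: cA; rewrite (cardsD1 j A) jA add1n => [[]].
have [S' [sS' iS' cS']] := IH _ cA'.
have jS' : j \notin S'.
  by apply/negP => /(subsetP sS'); rewrite setD11.
have eS' : cspan x S' = cspan x (A :\ j).
  by apply/eqP; rewrite eqEcard cspan_mono //= -cS'.
rewrite -(setD1K jA) card_cspan_U1 ?setD11 //.
case: ifP => xin.
  exists S'; split => //; apply: (subset_trans sS'); exact: subsetUr.
exists (j |: S'); split.
- by apply: setUS.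
- by apply: indep_add => //; rewrite eS' xin.
- by rewrite card_cspan_U1 // eS' xin.
Qed.

Lemma rk_span x : (#|F| ^ rk f x)%N = #|cspan x setT|.
Proof.
have q1 : (1 < #|F|)%N by apply: finRing_gt1.
apply/eqP; rewrite eqn_leq; apply/andP; split.
  have [S iS ->] : {S | S \in [pred S | lin_indep f x S] & rk f x = #|S| }.
    apply: eq_bigmax_cond; apply/card_gt0P; exists set0; rewrite inE.
    by apply/indepP => c _ i; rewrite in_set0.
  rewrite -(indep_card iS); apply: subset_leq_card; apply: cspan_mono; exact: subsetT.
have [S [_ iS cS]] := exists_basis x setT.
rewrite -cS indep_card // leq_exp2l //; exact: leq_bigmax_cond.
Qed.
End Comb.

Section Count.
Variables (F L : finFieldType) (f : {rmorphism F -> L}) (n : nat).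
Local Open Scope ring_scope.
Implicit Types (x : 'rV[L]_n) (A B S T : {set 'I_n}) (c d : {ffun 'I_n -> F}).

Definition Z k : {set 'rV[L]_n} := [set x : 'rV[L]_n | [forall i : 'I_n, (k <= i)%N ==> (x 0 i == 0)]].
Definition P k : {set 'I_n} := [set i : 'I_n | (i < k)%N].
Definition upd x (j : 'I_n) (y : L) : 'rV[L]_n := \row_i (if i == j then y else x 0 i).
Definition cnt k r : nat := (\sum_(x in Z k) (#|cspan f x (P k)| == #|F| ^ r)%N)%N.

Lemma cspan_ext x x' A : (forall i, i \in A -> x 0 i = x' 0 i) -> cspan f x A = cspan f x' A.
Proof.
move=> H; apply: eq_imset => c; apply: eq_bigr => i iA; by rewrite H.
Qed.

Lemma updE x j y i : upd x j y 0 i = if i == j then y else x 0 i.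
Proof. by rewrite mxE. Qed.

Lemma sum_split k (K : 'I_n) (hK : nat_of_ord K = k) (G : 'rV[L]_n -> nat) :
  (\sum_(x in Z k.+1) G x = \sum_(x in Z k) \sum_(y : L) G (upd x K y))%N.
Proof.
rewrite (partition_big (fun x => upd x K 0) (mem (Z k))) /=; last first.
  move=> x; rewrite !inE => /forallP H; apply/forallP => i; apply/implyP => ki.
  rewrite updE; case: ifP => [//|/negbT iK]; apply: (implyP (H i)).
  rewrite ltn_neqAle ki andbT; apply/eqP => e; move/eqP: iK; apply; apply: val_inj.
  by rewrite /= hK e.
apply: eq_bigr => x' x'Z.
rewrite (reindex_onto (fun y => upd x' K y) (fun x => x 0 K)) /=; last first.
  move=> x /andP [_ /eqP <-]; apply/rowP => i; rewrite !mxE.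
  by case: eqP => [->|].
apply: eq_bigl => y.
have x'K : x' 0 K = 0.
  by move: x'Z; rewrite inE => /forallP /(_ K) /implyP; rewrite hK leqnn => /(_ isT) /eqP.
rewrite updE eqxx eqxx andbT.
have -> : upd (upd x' K y) K 0 = x'.
  by apply/rowP => i; rewrite !mxE; case: eqP => [->|].
rewrite eqxx andbT inE; apply/forallP => i; apply/implyP => ki.
rewrite updE; case: ifP => [/eqP iK|_].
  by move: ki; rewrite iK hK ltnn.
move: x'Z; rewrite inE => /forallP /(_ i) /implyP; apply; exact: ltnW.
Qed.

Lemma P_S k (K : 'I_n) (hK : nat_of_ord K = k) : P k.+1 = K |: P k.
Proof.
apply/setP => i; rewrite !inE ltnS leq_eqVlt; congr (_ || _).
apply/eqP/eqP => [e|->//]; apply: val_inj; by rewrite /= e.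
Qed.

Lemma notin_P k (K : 'I_n) (hK : nat_of_ord K = k) : K \notin P k.
Proof. by rewrite inE hK ltnn. Qed.

Lemma sum_if (T : finType) (S : {set T}) (a b : nat) :
  (\sum_(y : T) (if y \in S then a else b) = #|S| * a + (#|T| - #|S|) * b)%N.
Proof.
rewrite (bigID (fun y => y \in S)) /=.
rewrite (eq_bigr (fun _ => a)); last by move=> y ->.
rewrite [X in (_ + X)%N](eq_bigr (fun _ => b)); last by move=> y /negbTE ->.
rewrite !sum_nat_const -(cardC S); congr (_ * _ + _ * _); last by rewrite addKn.
Qed.

Lemma inner k (K : 'I_n) (hK : nat_of_ord K = k) x' r :
  (\sum_(y : L) (#|cspan f (upd x' K y) (P k.+1)| == #|F| ^ r)
   = #|cspan f x' (P k)| * (#|cspan f x' (P k)| == #|F| ^ r)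
     + (#|L| - #|cspan f x' (P k)|) * (#|F| * #|cspan f x' (P k)| == #|F| ^ r))%N.
Proof.
set S := cspan f x' (P k).
have e : forall y, cspan f (upd x' K y) (P k) = S.
  move=> y; apply: cspan_ext => i iP; rewrite updE; case: ifP => // /eqP iK.
  by move: iP; rewrite iK (negPf (notin_P hK)).
under eq_bigr => y _ do rewrite (P_S hK) (card_cspan_U1 _ _ (notin_P hK)) e updE eqxx.
by rewrite -sum_if; apply: eq_bigr => y _; case: ifP.
Qed.

Lemma cnt_rec k (K : 'I_n) (hK : nat_of_ord K = k) r :
  cnt k.+1 r = (#|F| ^ r * cnt k r +
     (if r is r'.+1 then (#|L| - #|F| ^ r') * cnt k r' else 0))%N.
Proof.
have q1 : (1 < #|F|)%N by apply: finRing_gt1.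
rewrite /cnt (sum_split hK).
under eq_bigr => x' _ do rewrite (inner hK).
rewrite big_distrr /=.
case: r => [|r] /=.
  rewrite addn0; apply: eq_bigr => x' _.
  set s := #|cspan f x' (P k)|.
  have s1 : (0 < s)%N by rewrite card_gt0; apply/set0Pn; exists 0; exact: cspan0.
  have -> : (#|F| * s == #|F| ^ 0)%N = false.
    by apply: gtn_eqF; rewrite expn0 (leq_trans q1) // leq_pmulr.
  by rewrite muln0 addn0 expn0 mul1n; case: eqP => [->|]; rewrite ?muln0 ?muln1.
rewrite big_distrr -big_split /=; apply: eq_bigr => x' _.
set s := #|cspan f x' (P k)|.
rewrite expnS eqn_pmul2l; last by apply: ltnW.
congr (_ + _).
  by case: eqP => [->|]; rewrite ?muln0 ?muln1 // -expnS.
by case: eqP => [->|]; rewrite ?muln0 ?muln1.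
Qed.

Lemma Z0 : Z 0 = [set 0].
Proof.
apply/setP => x; rewrite !inE; apply/forallP/eqP => [H|->].
  apply/rowP => i; rewrite mxE; exact/eqP/(implyP (H i)).
by move=> i; rewrite mxE eqxx implybT.
Qed.

Lemma cnt0 r : cnt 0 r = (r == 0%N).
Proof.
have q1 : (1 < #|F|)%N by apply: finRing_gt1.
rewrite /cnt Z0 big_set1.
have -> : P 0 = set0 by apply/setP => i; rewrite !inE.
rewrite cspan_set0 cards1; case: r => [|r] //=.
by rewrite ltn_eqF // (leq_trans q1) // -{1}(expn1 #|F|) leq_exp2l.
Qed.

Lemma cnt_formula m (hL : #|L| = (#|F| ^ m)%N) k : (k <= n)%N ->
  forall r, cnt k r = (Gb #|F| k r * alpha #|F| m r)%N.
Proof.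
elim: k => [_|k IH kn] r.
  by rewrite cnt0; case: r => [|r] //=; rewrite alpha0.
rewrite (@cnt_rec k (Ordinal kn)) // !(IH (ltnW kn)).
have G0 : forall j, Gb #|F| j 0 = 1%N by case.
case: r => [|r] /=; first by rewrite !alpha0 expn0 addn0 mul1n !G0.
by rewrite alphaS hL (IH (ltnW kn) r); ring.
Qed.

Lemma cnt_n r : cnt n r = (\sum_(x : 'rV[L]_n) (rk f x == r))%N.
Proof.
have q1 : (1 < #|F|)%N by apply: finRing_gt1.
rewrite /cnt.
have -> : Z n = setT.
  by apply/setP => x; rewrite !inE; apply/forallP => i; apply/implyP; rewrite leqNgt ltn_ord.
have -> : P n = setT by apply/setP => i; rewrite !inE ltn_ord.
apply: eq_big => x; first by rewrite inE.
by rewrite -rk_span eqn_exp2l.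
Qed.
End Count.

Lemma sum_eq_ord (a N : nat) : (\sum_(u < N) (a == u :> nat) = (a < N))%N.
Proof.
elim: N => [|N IH]; first by rewrite big_ord0.
rewrite big_ord_recr /= IH ltnS leq_eqVlt.
case: (ltngtP a N) => h //=; lia.
Qed.

Lemma alpha_pos q m u : (1 < q)%N -> (u <= m)%N -> (0 < alpha q m u)%N.
Proof.
move=> q1 um; rewrite /alpha; apply: (big_ind (fun k => 0 < k)%N) => //.
  by move=> a b a0 b0; rewrite muln_gt0 a0 b0.
move=> i _; rewrite subn_gt0 ltn_exp2l //; exact: (leq_trans (ltn_ord i)).
Qed.

Lemma gbinE q n u : (1 < q)%N -> gbin q n u = Gb q n u.
Proof.
move=> q1; rewrite /gbin (alpha_Gb _ _ _ q1) mulnK //; exact: alpha_pos.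
Qed.

Lemma VolE q m n rho : (1 < q)%N -> Vol q m n rho = (\sum_(u < rho.+1) Tq q m n u)%N.
Proof. by move=> q1; apply: eq_bigr => u _; rewrite gbinE. Qed.

Section Aux.
Variables (F L : finFieldType) (f : {rmorphism F -> L}) (n : nat).
Local Open Scope ring_scope.
Lemma rk_support (x : 'rV[L]_n) (S : {set 'I_n}) : (forall i, i \notin S -> x 0%R i = 0%R) -> (rk f x <= #|S|)%N.
Proof.
move=> H; apply/bigmax_leqP => T iT; apply: subset_leq_card; apply/subsetP => i iTi.
apply/negPn/negP => niS.
move/indepP: iT => /(_ [ffun j => if j == i then 1 else 0]) Hc.
have : comb f x [ffun j => if j == i then 1 else 0] T = 0.
  rewrite /comb big1 // => j _; rewrite ffunE; case: eqP => [->|_].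
    by rewrite H // mulr0.
  by rewrite rmorph0 mul0r.
move/Hc/(_ i iTi); rewrite ffunE eqxx => /eqP; by rewrite oner_eq0.
Qed.

Lemma indep_ext (x x' : 'rV[L]_n) (S : {set 'I_n}) : (forall i, i \in S -> x 0%R i = x' 0%R i) ->
  lin_indep f x S = lin_indep f x' S.
Proof.
move=> H; rewrite /lin_indep; apply: eq_forallb => c.
congr (_ ==> _); congr (_ == 0); apply: eq_bigr => i iS; by rewrite H.
Qed.

End Aux.

Lemma bigmin_le_seq (I : eqType) (r : seq I) (P : pred I) (F : I -> nat) d t :
  t \in r -> P t -> (\big[minn/d]_(i <- r | P i) F i <= F t)%N.
Proof.
elim: r => [//|a r IH]; rewrite inE big_cons => /orP [/eqP <- Pt | tr Pt].
  by rewrite Pt; exact: geq_minl.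
case: ifP => _; last exact: IH.
apply: leq_trans (geq_minr _ _) _; exact: IH.
Qed.

Section Main.
Local Open Scope nat_scope.
Variables (F L : finFieldType) (f : {rmorphism F -> L}) (n m : nat).
Hypothesis hL : #|L| = (#|F| ^ m)%N.
Local Notation q := #|F|.

Lemma q1 : (1 < q)%N. Proof. exact: finRing_gt1. Qed.

Lemma card_rV : #|{: 'rV[L]_n}| = (q ^ (m * n))%N.
Proof. by rewrite card_mx hL mul1n expnM. Qed.

Lemma rk_le x : (rk f (x : 'rV[L]_n) <= n)%N.
Proof.
apply/bigmax_leqP => S _; apply: leq_trans (max_card _) _; by rewrite card_ord.
Qed.

Lemma ballsum rho : (\sum_(x : 'rV[L]_n) (rk f x <= rho) = \sum_(u < rho.+1) Tq q m n u)%N.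
Proof.
transitivity (\sum_(u < rho.+1) cnt f n n u)%N; last first.
  by apply: eq_bigr => u _; rewrite (cnt_formula f hL (leqnn n)).
under [RHS]eq_bigr => u _ do rewrite cnt_n.
rewrite exchange_big /=; apply: eq_bigr => x _; by rewrite sum_eq_ord ltnS.
Qed.

Lemma total : (\sum_(u < n.+1) Tq q m n u = q ^ (m * n))%N.
Proof.
rewrite -ballsum -card_rV -sum1_card; apply: eq_bigr => x _; by rewrite rk_le.
Qed.

Lemma cover (C : {set 'rV[L]_n}) rho : (rho < n)%N -> covrad f C = rho ->
  forall y, exists2 c, c \in C & (rk f (y - c) <= rho)%N.
Proof.
move=> rn cC y.
have hmin : (\big[minn/n]_(c in C) dR f y c <= rho)%N.
  rewrite -cC; exact: (@leq_bigmax _ (fun y => \big[minn/n]_(c in C) dR f y c) y).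
case: (boolP [exists c in C, dR f y c <= rho]%N) => [/exists_inP [c cC' h]|/exists_inP nh].
  by exists c.
exfalso; move: hmin; apply/negP; rewrite -ltnNge.
apply: (big_ind (fun k => rho < k)%N) => //.
  by move=> a b ha hb; rewrite leq_min ha hb.
move=> c cC'; rewrite ltnNge; apply/negP => h; apply: nh; by exists c.
Qed.

Lemma sphere (C : {set 'rV[L]_n}) rho : (rho < n)%N -> covrad f C = rho ->
  (q ^ (m * n) <= #|C| * \sum_(u < rho.+1) Tq q m n u)%N.
Proof.
move=> rn cC; rewrite -card_rV.
apply: (@leq_trans (\sum_(y : 'rV[L]_n) \sum_(c in C) (rk f (y - c) <= rho))%N).
  rewrite -sum1_card; apply: leq_sum => y _; have [c cin h] := cover rn cC y.
  by rewrite (bigD1 c) //= h.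
rewrite exchange_big /= -sum_nat_const; apply: leq_sum => c _.
rewrite -ballsum (reindex_inj (addIr c)) /=.
by under eq_bigr => y _ do rewrite addrK.
Qed.

Lemma lower (C : {set 'rV[L]_n}) rho : (0 < rho)%N -> (rho < n)%N -> (n <= m)%N ->
  covrad f C = rho -> (q ^ (m * n) %/ Vol q m n rho + 1 <= #|C|)%N.
Proof.
move=> r0 rn nm cC; rewrite addn1 VolE ?q1 // ltn_divLR; last first.
  rewrite big_ord_recl /Tq Gb0 alpha0 //.
rewrite ltn_neqAle sphere // andbT; apply/negP => /eqP e.
move: (vol_ndvd _ _ _ _ q1 r0 rn nm total); rewrite e dvdn_mull //.
Qed.

Lemma Gb_pos u : (u <= n)%N -> (0 < Gb q n u)%N.
Proof.
move=> un; rewrite lt0n; apply/negP => /eqP G0.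
have := Gb_coprime q _ _ un; rewrite G0 /coprime gcd0n => /eqP e.
by move: q1; rewrite e.
Qed.

Lemma exists_rk rho : (rho <= n)%N -> (n <= m)%N -> exists x : 'rV[L]_n, rk f x = rho.
Proof.
move=> rn nm.
have : (0 < cnt f n n rho)%N.
  by rewrite (cnt_formula f hL (leqnn n)) muln_gt0 Gb_pos // alpha_pos // ?q1 //; apply: (leq_trans rn).
rewrite cnt_n; case: (boolP [exists x : 'rV[L]_n, rk f x == rho]) => [/existsP [x /eqP]|/existsP nx].
  by exists x.
rewrite big1 // => x _; case: eqP => // e; exfalso; apply: nx; exists x; exact/eqP.
Qed.

Lemma card_code (S : {set 'I_n}) :
  (#|[set c : 'rV[L]_n | [forall i in S, c 0%R i == 0%R]]| <= #|L| ^ (n - #|S|))%N.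
Proof.
set C0 := [set c : 'rV[L]_n | _].
pose g (c : 'rV[L]_n) : {ffun {i : 'I_n | i \notin S} -> L} := [ffun i => c 0%R (val i)].
rewrite -(card_in_imset (f := g)); last first.
  move=> c c'; rewrite !inE => /forall_inP Hc /forall_inP Hc' e.
  apply/rowP => i.
  case: (boolP (i \in S)) => iS.
    by rewrite (eqP (Hc _ iS)) (eqP (Hc' _ iS)).
  by have := congr1 (fun h : {ffun {i : 'I_n | i \notin S} -> L} => h (exist _ i iS)) e; rewrite /g !ffunE.
apply: leq_trans (max_card _) _; rewrite card_ffun card_sig.
have := cardC S; rewrite card_ord => e.
have -> : #|[pred x | x \notin S]| = #|[predC S]| by apply: eq_card.
have -> : (n - #|S| = #|[predC S]|)%N by rewrite -[X in (X - _)%N]e addKn.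
by [].
Qed.

Lemma upper rho : (0 < rho)%N -> (rho < n)%N -> (n <= m)%N ->
  (KR f n rho <= q ^ (m * (n - rho)))%N.
Proof.
move=> r0 rn nm.
have [x0 rx0] := exists_rk (ltnW rn) nm.
have [S0 iS0 cS0] : {S | S \in [pred S | lin_indep f x0 S] & rk f x0 = #|S|}.
  apply: eq_bigmax_cond; apply/card_gt0P; exists set0; rewrite inE.
  by apply/indepP => c _ i; rewrite in_set0.
rewrite inE in iS0.
set C0 := [set c : 'rV[L]_n | [forall i in S0, c 0%R i == 0%R]].
have C0n : C0 != set0.
  by apply/set0Pn; exists 0%R; rewrite inE; apply/forall_inP => i _; rewrite mxE.
have cov : covrad f C0 = rho.
  apply/eqP; rewrite eqn_leq; apply/andP; split.
    apply/bigmax_leqP => y _.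
    pose cy := (\row_i (if i \in S0 then 0 else y 0 i))%R.
    have cyC : cy \in C0 by rewrite inE; apply/forall_inP => i iS; rewrite mxE iS.
    apply: leq_trans (bigmin_le_seq _ _ (mem_index_enum cy) cyC) _.
    rewrite /dR -rx0 cS0; apply: rk_support => i niS.
    by rewrite !mxE (negPf niS) subrr.
  apply: leq_trans (leq_bigmax x0); rewrite /=.
  apply: (big_ind (fun k => rho <= k)%N); first exact: ltnW.
    by move=> a b ha hb; rewrite leq_min ha hb.
  move=> c; rewrite inE => /forall_inP Hc.
  rewrite /dR -rx0 cS0; apply: leq_bigmax_cond.
  rewrite (@indep_ext _ _ f _ _ x0) // => i iS.
  by rewrite !mxE (eqP (Hc i iS)) subr0.
apply: (@leq_trans #|C0|).
  rewrite /KR; apply: bigmin_le_seq; first exact: mem_index_enum.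
  by rewrite C0n cov eqxx.
apply: leq_trans (card_code S0) _.
by rewrite hL -cS0 rx0 expnM.
Qed.
End Main.

Theorem proposition6 (F L : finFieldType) (f : {rmorphism F -> L})
  (m n rho : nat) (hL : #|L| = (#|F| ^ m)%N)
  (hnm : (n <= m)%N) (hrho0 : (0 < rho)%N) (hrhon : (rho < n)%N) :
  ((#|F| ^ (m * n)) %/ Vol #|F| m n rho + 1 <= KR f n rho)%N /\
  (KR f n rho <= #|F| ^ (m * (n - rho)))%N.
Proof.
split; last exact: upper.
rewrite /KR; apply: (big_ind (fun k => #|F| ^ (m * n) %/ Vol #|F| m n rho + 1 <= k)%N).
- rewrite (card_rV n hL) addn1 ltn_Pdiv ?expn_gt0 ?(ltnW (q1 F)) //.
  rewrite VolE ?q1 // big_ord_recl /Tq Gb0 alpha0 mul1n.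
  case: rho hrho0 hrhon => [//|r] _ rn.
  rewrite big_ord_recl /= alphaS alpha0 mul1n expn0.
  have : (0 < Gb #|F| n 1)%N by apply: Gb_pos; apply: (leq_trans _ rn).
  have : (1 < #|F| ^ m)%N.
    by rewrite (leq_trans (q1 F)) // -{1}(expn1 #|F|) leq_exp2l ?q1 //; lia.
  rewrite /bump /= addn0 => h1 h2; nia.
- by move=> a b ha hb; rewrite leq_min ha hb.
move=> C /andP [_ /eqP cC]; exact: (lower hL hrho0 hrhon hnm cC).
Qed.
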